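(* Let $\mathfrak d$ be a delta operator on $\mathbb K[x]$ with basic sequence $(p_n(x))_{n\ge0}$. For each $i\in\mathbb N$ let $\Phi_i=\sum_{j\ge0}a^{(i)}_j\,\mathfrak d^{\,i+j}$, where $a^{(i)}_j\in\mathbb K$ and $a^{(i)}_0\neq0$ (the sum acts on each polynomial as a finite sum, since $\mathfrak d$ lowers degree by one). (1) There exists a unique sequence $(f_n(x))_{n\ge0}$ of polynomials with $\deg f_n=n$ such that $\varepsilon_0(\Phi_i(f_n))=n!\,\delta_{i,n}$ for all $i,n\in\mathbb N$. Moreover, for every $n$, $$f_n(x)=\frac{n!}{a^{(0)}_0a^{(1)}_0\cdots a^{(n)}_0}\det\Lambda^{(n)},$$ where $\Lambda^{(n)}$ is the $(n+1)\times(n+1)$ matrix (rows and columns indexed by $0,\dots,n$, entries in $\mathbb K[x]$) with $(i,j)$-entry equal to $a^{(i)}_{j-i}$ if $0\le i\le\min(j,n-1)$, equal to $p_j(x)/j!$ if $i=n$, and $0$ otherwise. (2) The sequence $(f_n(x))_{n\ge0}$ is a basis of $\mathbb K[x]$, and for every $f\in\mathbb K[x]$, $$f(x)=\sum_{n=0}^{\deg f}\frac{\varepsilon_0(\Phi_n(f))}{n!}\,f_n(x).$$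
   Context: $\mathbb K$ is a field of characteristic zero. For $a\in\mathbb K$, $E_a$ is the shift operator $f(x)\mapsto f(x+a)$ on $\mathbb K[x]$; a linear operator $S$ on $\mathbb K[x]$ is shift-invariant if $SE_a=E_aS$ for all $a\in\mathbb K$. A delta operator is a shift-invariant linear operator $\mathfrak d$ on $\mathbb K[x]$ such that $\mathfrak d(x)$ is a nonzero constant. The basic sequence of $\mathfrak d$ is the unique sequence of polynomials $(p_n(x))_{n\ge0}$ with $\deg p_n=n$, $p_0=1$, $p_n(0)=0$ for $n\ge1$, and $\mathfrak d(p_n)=np_{n-1}$ for $n\ge1$. For $z\in\mathbb K$, $\varepsilon_z$ denotes evaluation at $z$. $\delta_{i,n}$ is the Kronecker delta. *)

(* Defs.v *)
From HB Require Import structures.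
From mathcomp Require Import all_boot all_order all_algebra.
Set Implicit Arguments. Unset Strict Implicit. Unset Printing Implicit Defensive.
Import Order.TTheory GRing.Theory Num.Theory.
Local Open Scope ring_scope.

Definition shift (K : fieldType) (a : K) (p : {poly K}) : {poly K} :=
  p \Po ('X + a%:P).

Definition shift_invariant (K : fieldType) (S : {poly K} -> {poly K}) : Prop :=
  forall (a : K) (p : {poly K}), S (shift a p) = shift a (S p).

Definition delta_op (K : fieldType) (d : {linear {poly K} -> {poly K}}) : Prop :=
  shift_invariant d /\ exists c : K, c != 0 /\ d 'X = c%:P.

Definition basic_seq (K : fieldType) (d : {poly K} -> {poly K})
    (p : nat -> {poly K}) : Prop :=
  [/\ forall n, size (p n) = n.+1,
      p 0%N = 1,
      forall n, (0 < n)%N -> (p n).[0] = 0 &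
      forall n, (0 < n)%N -> d (p n) = n%:R *: p n.-1].

(* The sum is truncated at
   j < size f: for j >= size f we have i + j > deg f, so d^(i+j) f = 0
   (a delta operator lowers degrees by one), i.e. the truncation is just
   the finite form of the formal sum. *)
Definition Phi (K : fieldType) (d : {poly K} -> {poly K})
    (a : nat -> nat -> K) (i : nat) (f : {poly K}) : {poly K} :=
  \sum_(j < size f) a i j *: iter (i + j) d f.

Definition Lambda (K : fieldType) (a : nat -> nat -> K)
    (p : nat -> {poly K}) (n : nat) : 'M[{poly K}]_(n.+1) :=
  \matrix_(i < n.+1, j < n.+1)
    if (i == n :> nat) then ((j`!)%:R)^-1 *: p j
    else if (i <= j)%N then (a i (j - i)%N)%:P else 0.

Definition biorth (K : fieldType) (d : {poly K} -> {poly K})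
    (a : nat -> nat -> K) (f : nat -> {poly K}) : Prop :=
  (forall n, size (f n) = n.+1) /\
  (forall i n, (Phi d a i (f n)).[0] = (n`!)%:R * (i == n)%:R).

(* Main.v *)
Require Import Defs.
From HB Require Import structures.
From mathcomp Require Import all_boot all_order all_algebra.
From Stdlib Require Import FunctionalExtensionality.
Import Order.TTheory GRing.Theory Num.Theory.
Local Open Scope ring_scope.

Theorem mainTheorem1 (K : fieldType) (charK : [pchar K] =i pred0)
    (d : {linear {poly K} -> {poly K}}) (hd : delta_op d)
    (p : nat -> {poly K}) (hp : basic_seq d p)
    (a : nat -> nat -> K) (ha : forall i, a i 0%N != 0) :
  exists f : nat -> {poly K},
    [/\ biorth d a f,
        forall g : nat -> {poly K}, biorth d a g -> g = f,
        forall n, f n = ((n`!)%:R / \prod_(i < n.+1) a i 0%N) *: \det (Lambda a p n),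
        (forall (m : nat) (c : 'I_m -> K),
            \sum_(k < m) c k *: f k = 0 -> forall k, c k = 0) &
        forall g : {poly K},
          g = \sum_(n < size g) ((Phi d a n g).[0] / (n`!)%:R) *: f n].
Proof.
have natn0 : forall n : nat, (n%:R == 0 :> K) = (n == 0)%N.
  by apply/pcharf0P.
have fact0 : forall n, (n`!)%:R != 0 :> K.
  by move=> n; rewrite natn0 -lt0n fact_gt0.
case: hp => psz p0 pev pd.
case: hd => hsh [c [c0 dX]].
have d1 : d 1 = 0.
  have := hsh 1 'X; rewrite /shift comp_polyX dX comp_polyC linearD dX.
  by move/eqP; rewrite -subr_eq0 addrAC subrr add0r => /eqP.
have dlow : forall n (g : {poly K}), (size g <= n.+1)%N -> (size (d g) <= n)%N.
  elim=> [|n IH] g hg.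
    by rewrite (size1_polyC hg) -alg_polyC linearZ /= d1 scaler0 size_poly0.
  have hl : (p n.+1)`_n.+1 != 0.
    have : lead_coef (p n.+1) != 0 by rewrite lead_coef_eq0 -size_poly_eq0 psz.
    by rewrite lead_coefE psz.
  set cc := g`_n.+1 / (p n.+1)`_n.+1.
  have hr : (size (g - cc *: p n.+1)%R <= n.+1)%N.
    apply/leq_sizeP => j; rewrite leq_eqVlt => /orP [/eqP <-|hj].
      by rewrite coefB coefZ /cc divfK // subrr.
    rewrite coefB coefZ.
    move/leq_sizeP: hg => -> //; have : (size (p n.+1) <= n.+2)%N by rewrite psz.
    by move/leq_sizeP => -> //; rewrite mulr0 subrr.
  have -> : g = (g - cc *: p n.+1) + cc *: p n.+1 by rewrite subrK.
  move: hr; set r := (g - _)%R => hr.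
  rewrite linearD [d (cc *: _)]linearZ /= pd //= -scalerA.
  apply: (leq_trans (size_polyD _ _)); rewrite geq_max (leq_trans (IH _ hr)) //.
  apply: (leq_trans (size_scale_leq _ _)); apply: (leq_trans (size_scale_leq _ _)).
  by apply: (leq_trans (size_scale_leq _ _)); rewrite psz.
have iterlow : forall m (g : {poly K}), (size g <= m)%N -> iter m d g = 0.
  elim=> [|m IH] g hg; first by apply/eqP; rewrite /= -size_poly_eq0 -leqn0.
  by rewrite iterSr IH // dlow.
have iterD : forall m (g h : {poly K}), iter m d (g + h) = iter m d g + iter m d h.
  by elim=> [|m IH] g h //=; rewrite IH linearD.
have iterZ : forall m (k : K) (g : {poly K}), iter m d (k *: g) = k *: iter m d g.
  by elim=> [|m IH] k g //=; rewrite IH linearZ.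
have Phi_ext : forall i (g : {poly K}) N, (size g <= N)%N ->
    Phi d a i g = \sum_(j < N) a i j *: iter (i + j) d g.
  move=> i g N hN; rewrite /Phi (big_ord_widen N (fun j => a i j *: iter (i + j) d g) hN).
  rewrite big_mkcond /=; apply: eq_bigr => j _.
  case: ifP => // /negbT; rewrite -leqNgt => hj.
  by rewrite iterlow ?scaler0 // (leq_trans hj) // leq_addl.
pose L i g := (Phi d a i g).[0].
have LD : forall i g h, L i (g + h) = L i g + L i h.
  move=> i g h; rewrite /L (Phi_ext i (g + h) (size g + size h)%N); last first.
    by apply: (leq_trans (size_polyD _ _)); rewrite geq_max leq_addr leq_addl.
  rewrite (Phi_ext i g (size g + size h)%N) ?leq_addr //.
  rewrite (Phi_ext i h (size g + size h)%N) ?leq_addl //.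
  rewrite -hornerD -big_split /=; congr (_.[0]); apply: eq_bigr => j _.
  by rewrite iterD scalerDr.
have LZ : forall i k g, L i (k *: g) = k * L i g.
  move=> i k g; rewrite /L (Phi_ext i (k *: g) (size g)) ?size_scale_leq //.
  rewrite /Phi -hornerZ scaler_sumr; congr (_.[0]); apply: eq_bigr => j _.
  by rewrite iterZ !scalerA mulrC.
have L0 : forall i, L i 0 = 0.
  by move=> i; rewrite -(scale0r 0) LZ mul0r.
have Lsum : forall i m (F : 'I_m -> {poly K}), L i (\sum_(k < m) F k) = \sum_(k < m) L i (F k).
  by move=> i m F; apply: (big_morph (L i) (LD i) (L0 i)).
have Lsmall : forall i (g : {poly K}), (size g <= i)%N -> L i g = 0.
  move=> i g hg; rewrite /L /Phi horner_sum big1 // => j _.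
  by rewrite iterlow ?scaler0 ?horner0 // (leq_trans hg) // leq_addr.
pose q j := ((j`!)%:R)^-1 *: p j.
have qsz : forall j, size (q j) = j.+1.
  by move=> j; rewrite size_scale ?psz // invr_neq0.
have dq : forall j, d (q j.+1) = q j.
  move=> j; rewrite /q linearZ /= pd //= scalerA; congr (_ *: _).
  by rewrite factS natrM invfM mulrAC mulVf ?mul1r // natn0.
have dq0 : d (q 0%N) = 0 by rewrite /q linearZ /= p0 d1 scaler0.
have iterq : forall m j, iter m d (q j) = if (m <= j)%N then q (j - m)%N else 0.
  elim=> [|m IH] j; first by rewrite subn0.
  rewrite [iter _ _ _]/= IH; case: (ltngtP m j) => h.
  - by rewrite -subnSK // dq.
  - by rewrite linear0.
  - by rewrite h subnn dq0.
have q0e : forall j, (q j).[0] = (j == 0%N)%:R.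
  case=> [|j]; first by rewrite /q hornerZ p0 hornerE /= invr1 mulr1.
  by rewrite /q hornerZ pev // mulr0.
have iq0 : forall m j, (iter m d (q j)).[0] = (m == j)%:R.
  move=> m j; rewrite iterq; case: ifP => h.
    by rewrite q0e subn_eq0 eqn_leq h.
  by rewrite horner0 eqn_leq h.
have Lq : forall i j, L i (q j) = if (i <= j)%N then a i (j - i)%N else 0.
  move=> i j; rewrite /L /Phi qsz horner_sum.
  under eq_bigr do rewrite hornerZ iq0.
  case: leqP => h.
    have hji : (j - i < j.+1)%N by rewrite ltnS leq_subr.
    rewrite (bigD1 (Ordinal hji)) //= subnKC // eqxx mulr1 big1 ?addr0 // => k hk.
    rewrite (_ : (i + k == j) = false) ?mulr0 //; apply/negbTE; apply: contra hk => /eqP e.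
    apply/eqP/val_inj => /=; apply/eqP; rewrite -(eqn_add2l i) subnKC //; apply/eqP; exact: e.
  by rewrite big1 // => k _; rewrite gtn_eqF ?mulr0 // (leq_trans h) // leq_addr.
have kz : forall m (g : {poly K}), (size g <= m)%N ->
    (forall i, (i < m)%N -> L i g = 0) -> g = 0.
  elim=> [|m IH] g hg hL; first by apply/eqP; rewrite -size_poly_eq0 -leqn0.
  have hl : (q m)`_m != 0.
    have : lead_coef (q m) != 0 by rewrite lead_coef_eq0 -size_poly_eq0 qsz.
    by rewrite lead_coefE qsz.
  set cc := g`_m / (q m)`_m.
  have hr : (size (g - cc *: q m)%R <= m)%N.
    apply/leq_sizeP => j; rewrite leq_eqVlt => /orP [/eqP <-|hj].
      by rewrite coefB coefZ /cc divfK // subrr.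
    rewrite coefB coefZ.
    move/leq_sizeP: hg => -> //; have : (size (q m) <= m.+1)%N by rewrite qsz.
    by move/leq_sizeP => -> //; rewrite mulr0 subrr.
  have hcc : cc = 0.
    have := hL m (ltnSn m).
    have -> : g = (g - cc *: q m) + cc *: q m by rewrite subrK.
    rewrite LD LZ Lsmall // Lq leqnn subnn add0r => /eqP.
    by rewrite mulf_eq0 (negbTE (ha m)) orbF => /eqP.
  move: hr; rewrite hcc scale0r subr0 => hr.
  by apply: IH => // i hi; apply: hL; rewrite ltnS ltnW.
pose A i j := if (i <= j)%N then a i (j - i)%N else 0.
pose S n : 'M[K]_(n.+1) := \matrix_(k < n.+1, j < n.+1) A (k : nat) (j : nat).
pose T n i : 'M[K]_(n.+1) := \matrix_(k < n.+1, j < n.+1)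
   (if (k == n :> nat) then A i (j : nat) else A (k : nat) (j : nat)).
have cofeq : forall (R : comPzRingType) m (M N : 'M[R]_m.+1) j,
    (forall k l, k != ord_max -> M k l = N k l) -> cofactor M ord_max j = cofactor N ord_max j.
  move=> R m M N j hMN; rewrite /cofactor; congr (_ * \det _).
  apply/matrixP => k l; rewrite !mxE; apply: hMN; by rewrite eq_sym neq_lift.
have detL : forall n, \det (Lambda a p n) = \sum_(j < n.+1) cofactor (S n) ord_max j *: q j.
  move=> n; rewrite (expand_det_row _ ord_max); apply: eq_bigr => j _.
  rewrite (cofeq _ _ _ (map_mx polyC (S n))); last first.
    move=> k l hk; rewrite !mxE.
    have -> : (k == n :> nat) = false by apply/negbTE.
    by rewrite /A; case: ifP.
  by rewrite cofactor_map_mx mxE eqxx mulrC mul_polyC.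
have detT : forall n i, \det (T n i) = \sum_(j < n.+1) A i j * cofactor (S n) ord_max j.
  move=> n i; rewrite (expand_det_row _ ord_max); apply: eq_bigr => j _.
  rewrite (cofeq _ _ _ (S n)); last first.
    move=> k l hk; rewrite !mxE.
    by have -> : (k == n :> nat) = false by apply/negbTE.
  by rewrite mxE eqxx.
pose C n := ((n`!)%:R / \prod_(i < n.+1) a i 0%N) : K.
pose f n := C n *: \det (Lambda a p n).
have Lf : forall n i, L i (f n) = C n * \det (T n i).
  move=> n i; rewrite /f LZ detL Lsum detT; congr (_ * _); apply: eq_bigr => j _.
  by rewrite LZ Lq mulrC.
have prod0 : forall n, \prod_(i < n.+1) a i 0%N != 0.
  by move=> n; apply/prodf_neq0 => i _; exact: ha.
have Lf2 : forall n i, L i (f n) = (n`!)%:R * (i == n)%:R.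
  move=> n i; rewrite Lf; case: (ltngtP i n) => h.
  - have hi : (i < n.+1)%N by rewrite ltnS ltnW.
    rewrite (@determinant_alternate _ _ _ (Ordinal hi) ord_max) ?mulr0 ?(ltn_eqF h) ?mulr0 //.
      by rewrite -val_eqE /= ltn_eqF.
    by move=> l; rewrite !mxE /= ltn_eqF // (@eqxx nat n).
  - rewrite detT big1 ?mulr0 ?gtn_eqF ?mulr0 // => j _.
    by rewrite /A leqNgt (leq_trans (ltn_ord j)) ?mul0r.
  - rewrite h mulr1 -det_tr det_trig.
      rewrite /C -mulrA (_ : \prod_(k < n.+1) _ = \prod_(i < n.+1) a i 0%N) ?mulVf ?mulr1 //.
      apply: eq_bigr => k _; rewrite !mxE; case: eqP => [e|_]; by rewrite /A ?e leqnn subnn.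
    apply/is_trig_mxP => k l hkl; rewrite !mxE.
    by case: eqP => [e|_]; rewrite /A leqNgt ?hkl //; move: hkl; rewrite e => ->.
have sumsz : forall N m (F : 'I_m -> {poly K}), (forall k, size (F k) <= N)%N ->
    (size (\sum_(k < m) F k)%R <= N)%N.
  move=> N m F hF; apply: (big_ind (fun g : {poly K} => (size g <= N)%N)) => //.
  - by rewrite size_poly0.
  - by move=> x y hx hy; apply: (leq_trans (size_polyD _ _)); rewrite geq_max hx hy.
have fsz_le : forall n, (size (f n) <= n.+1)%N.
  move=> n; rewrite /f detL; apply: (leq_trans (size_scale_leq _ _)).
  by apply: sumsz => j; apply: (leq_trans (size_scale_leq _ _)); rewrite qsz.
have fsz : forall n, size (f n) = n.+1.
  move=> n; apply/eqP; rewrite eqn_leq fsz_le /= ltnNge; apply/negP => h.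
  have := Lf2 n n; rewrite Lsmall // eqxx mulr1 => /esym/eqP.
  by rewrite (negbTE (fact0 n)).
have Lneg : forall i (g h : {poly K}), L i (g - h) = L i g - L i h.
  move=> i g h; rewrite -scaleN1r LD LZ mulN1r //.
exists f; split.
- by split; [exact: fsz | move=> i n; exact: Lf2].
- move=> g [gsz gL]; apply: functional_extensionality => n.
  have gL' : forall i n, L i (g n) = (n`!)%:R * (i == n)%:R := gL.
  apply/eqP; rewrite -subr_eq0; apply/eqP; apply: (kz n.+1).
    by apply: (leq_trans (size_polyD _ _)); rewrite size_opp gsz fsz maxnn.
  by move=> i _; rewrite Lneg gL' Lf2 subrr.
- by [].
- move=> m cc hs k.
  have := f_equal (L k) hs; rewrite Lsum L0 (bigD1 k) //= LZ Lf2 eqxx mulr1 big1 ?addr0.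
    by move/eqP; rewrite mulf_eq0 (negbTE (fact0 k)) orbF => /eqP.
  move=> j hj; rewrite LZ Lf2.
  have -> : (k == j :> nat) = false by apply/negbTE; rewrite eq_sym.
  by rewrite !mulr0.
- move=> g; apply/eqP; rewrite -subr_eq0; apply/eqP; apply: (kz (size g)).
    apply: (leq_trans (size_polyD _ _)); rewrite size_opp geq_max leqnn /=.
    apply: sumsz => k; apply: (leq_trans (size_scale_leq _ _)); by rewrite fsz.
  move=> i hi; rewrite Lneg Lsum (bigD1 (Ordinal hi)) //= LZ Lf2 eqxx mulr1.
  rewrite divfK // big1 ?addr0 ?subrr // => j hj.
  rewrite LZ Lf2.
  have -> : (i == j :> nat) = false by apply/negbTE; rewrite eq_sym.
  by rewrite !mulr0.
Qed.
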